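(* Let $T>0$. Let $B_1,B_2,d_1,d_2$ be nonnegative functions of $(t,x)\in\mathbb{R}\times[0,\infty)$, $T$-periodic in $t$. Suppose that for $k=1,2$ there exist a real $\mu_k$ and a positive function $\phi^k$, $T$-periodic in $t$, such that $$-\partial_t\phi^k(t,x)-\partial_x\phi^k(t,x)+[d_k(t,x)+\mu_k]\phi^k(t,x)\geq B_k(t,x)\,\phi^k(t,0).$$ For $\theta\in[0,1]$ let $\phi^\theta=(\phi^1)^\theta(\phi^2)^{1-\theta}$, $B^\theta=B_1^\theta B_2^{1-\theta}$ and $d^\theta=\theta d_1+(1-\theta)d_2$. Then $\phi^\theta$ is positive, $T$-periodic in $t$, and $$-\partial_t\phi^\theta(t,x)-\partial_x\phi^\theta(t,x)+[\theta\mu_1+(1-\theta)\mu_2+d^\theta(t,x)]\phi^\theta(t,x)\geq B^\theta(t,x)\,\phi^\theta(t,0).$$ *)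

(* Defs.v *)
From Stdlib Require Import Reals Lra.
From Coquelicot Require Import Coquelicot.
Open Scope R_scope.

(* Real power a^θ for a >= 0, with the conventions 0^0 = 1 and 0^θ = 0 for θ <> 0;
   for a > 0 it is Rpower a θ = exp (θ ln a). *)
Definition rpow (a th : R) : R :=
  if Req_EM_T a 0 then (if Req_EM_T th 0 then 1 else 0) else Rpower a th.

Definition has_pdt (f : R -> R -> R) (t x l : R) : Prop :=
  is_derive (fun s => f s x) t l.

(* Partial derivative in x of f at (t,x) equals l, taken within the domain
   x in [0, +oo) (so one-sided at x = 0). *)
Definition has_pdx (f : R -> R -> R) (t x l : R) : Prop :=
  filterlim (fun y => (f t y - f t x) / (y - x))
    (within (fun y => 0 <= y /\ y <> x) (locally x)) (locally l).

Definition supersol (B d : R -> R -> R) (mu : R) (phi : R -> R -> R) : Prop :=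
  forall t x, 0 <= x ->
    exists dt dx, has_pdt phi t x dt /\ has_pdx phi t x dx /\
      - dt - dx + (d t x + mu) * phi t x >= B t x * phi t 0.

Definition periodic_t (T : R) (f : R -> R -> R) : Prop :=
  forall t x, 0 <= x -> f (t + T) x = f t x.

(* Main.v *)
Require Import Defs.
From Stdlib Require Import Reals Lra.
From Coquelicot Require Import Coquelicot.
Open Scope R_scope.

Definition Dm (x : R) := fun y : R => 0 <= y /\ y <> x.
Definition pdx (g : R -> R) (x l : R) : Prop :=
  filterlim (fun y => (g y - g x) / (y - x)) (within (Dm x) (locally x)) (locally l).

Lemma lim_mult {T} {F : (T -> Prop) -> Prop} {FF : Filter F} (f g : T -> R) a b :
  filterlim f F (locally a) -> filterlim g F (locally b) ->
  filterlim (fun y => f y * g y) F (locally (a * b)).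
Proof. intros Hf Hg. eapply filterlim_comp_2; [exact Hf|exact Hg|]. apply (filterlim_mult a b). Qed.

Lemma lim_plus {T} {F : (T -> Prop) -> Prop} {FF : Filter F} (f g : T -> R) a b :
  filterlim f F (locally a) -> filterlim g F (locally b) ->
  filterlim (fun y => f y + g y) F (locally (a + b)).
Proof. intros Hf Hg. eapply filterlim_comp_2; [exact Hf|exact Hg|]. apply (filterlim_plus a b). Qed.

Lemma pdx_cont g x l : pdx g x l -> filterlim g (within (Dm x) (locally x)) (locally (g x)).
Proof.
  intros H.
  assert (Hid : filterlim (fun y => y - x) (within (Dm x) (locally x)) (locally 0)).
  { replace 0 with (x - x) by ring.
    apply (lim_plus (fun y => y) (fun _ => - x)).
    - eapply filterlim_filter_le_1. apply filter_le_within. apply filterlim_id.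
    - apply filterlim_const. }
  pose proof (lim_mult _ _ _ _ H Hid) as Hm.
  pose proof (lim_plus (fun _ => g x) _ _ _ (filterlim_const (g x)) Hm) as Hs.
  rewrite Rmult_0_r, Rplus_0_r in Hs.
  eapply filterlim_ext_loc; [|exact Hs].
  unfold within; apply filter_forall. intros y [Hy Hyx]. field. lra.
Qed.

(* Caratheodory *)
Lemma pdx_comp G g x l dG : pdx g x l -> is_derive G (g x) dG ->
  pdx (fun y => G (g y)) x (dG * l).
Proof.
  intros H HG. apply is_derive_Reals in HG.
  set (c := g x).
  set (Q := fun z => if Req_EM_T z c then dG else (G z - G c) / (z - c)).
  assert (HQ : filterlim Q (locally c) (locally dG)).
  { apply filterlim_locally. intros eps.
    destruct (HG eps (cond_pos eps)) as [del Hdel].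
    exists del. intros z Hz. unfold Q. destruct (Req_EM_T z c) as [e|ne].
    - apply ball_center.
    - change (Rabs ((G z - G c)/(z - c) - dG) < eps).
      replace z with (c + (z - c)) at 1 by ring.
      apply Hdel. lra. exact Hz. }
  pose proof (filterlim_comp _ _ _ _ Q _ _ _ (pdx_cont _ _ _ H) HQ) as HQg.
  pose proof (lim_mult _ _ _ _ HQg H) as Hm.
  unfold pdx. eapply filterlim_ext_loc; [|exact Hm].
  unfold within; apply filter_forall. intros y [Hy Hyx]. unfold Q. fold c.
  destruct (Req_EM_T (g y) c) as [e|ne].
  - rewrite e. unfold Rdiv. ring.
  - field. split; lra.
Qed.

Lemma pdx_lin a b f g x l1 l2 : pdx f x l1 -> pdx g x l2 ->
  pdx (fun y => a * f y + b * g y) x (a * l1 + b * l2).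
Proof.
  intros H1 H2.
  pose proof (lim_plus _ _ _ _ (lim_mult _ _ _ _ (filterlim_const a) H1)
     (lim_mult _ _ _ _ (filterlim_const b) H2)) as Hs.
  unfold pdx. eapply filterlim_ext_loc; [|exact Hs].
  unfold within; apply filter_forall. intros y [Hy Hyx]. field. lra.
Qed.

Lemma pdx_ext f g x l : 0 <= x -> (forall y, 0 <= y -> f y = g y) -> pdx f x l -> pdx g x l.
Proof.
  intros Hx He H. unfold pdx. eapply filterlim_ext_loc; [|exact H].
  unfold within; apply filter_forall. intros y [Hy Hyx]. rewrite !He; auto.
Qed.
Lemma rpow_pos a th : 0 < a -> rpow a th = exp (th * ln a).
Proof. intros Ha. unfold rpow. destruct (Req_EM_T a 0); [lra|reflexivity]. Qed.

Lemma rpow_mulpos B c th : 0 <= B -> 0 < c -> rpow (B * c) th = rpow B th * exp (th * ln c).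
Proof.
  intros HB Hc. destruct (Req_EM_T B 0) as [e|ne].
  - subst. rewrite Rmult_0_l. unfold rpow. destruct (Req_EM_T 0 0); [|lra].
    destruct (Req_EM_T th 0); [subst; rewrite Rmult_0_l, exp_0; ring|ring].
  - rewrite !rpow_pos by nra. rewrite ln_mult by lra. rewrite <- exp_plus. f_equal; ring.
Qed.

Lemma amgm u v th : 0 <= u -> 0 <= v -> 0 <= th <= 1 ->
  rpow u th * rpow v (1 - th) <= th * u + (1 - th) * v.
Proof.
  intros Hu Hv Hth.
  destruct (Req_EM_T th 0) as [e0|n0].
  { subst. replace (1 - 0) with 1 by ring.
    unfold rpow. destruct (Req_EM_T u 0), (Req_EM_T v 0), (Req_EM_T 0 0), (Req_EM_T 1 0);
      try lra; rewrite ?Rpower_1 by lra; try lra.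
    all: unfold Rpower; rewrite Rmult_0_l, exp_0; lra. }
  destruct (Req_EM_T th 1) as [e1|n1].
  { subst. replace (1 - 1) with 0 by ring.
    unfold rpow. destruct (Req_EM_T u 0), (Req_EM_T v 0), (Req_EM_T 0 0), (Req_EM_T 1 0);
      try lra; rewrite ?Rpower_1 by lra; try lra.
    all: unfold Rpower; rewrite Rmult_0_l, exp_0; lra. }
  destruct (Req_EM_T u 0) as [eu|nu].
  { subst. unfold rpow at 1. destruct (Req_EM_T 0 0); [|lra].
    destruct (Req_EM_T th 0); [lra|]. nra. }
  destruct (Req_EM_T v 0) as [ev|nv].
  { subst. unfold rpow at 2. destruct (Req_EM_T 0 0); [|lra].
    destruct (Req_EM_T (1 - th) 0); [lra|]. nra. }
  rewrite !rpow_pos by lra. rewrite <- exp_plus.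
  set (p := ln u). set (q := ln v).
  replace u with (exp p) by (apply exp_ln; lra).
  replace v with (exp q) by (apply exp_ln; lra).
  set (m := th * p + (1 - th) * q).
  assert (E1 : exp p = exp m * exp (p - m)) by (rewrite <- exp_plus; f_equal; ring).
  assert (E2 : exp q = exp m * exp (q - m)) by (rewrite <- exp_plus; f_equal; ring).
  pose proof (exp_ineq1_le (p - m)). pose proof (exp_ineq1_le (q - m)).
  pose proof (exp_pos m).
  rewrite E1, E2.
  assert (th * (exp m * (1 + (p - m))) + (1 - th) * (exp m * (1 + (q - m))) = exp m)
    by (unfold m; ring).
  assert (th * (exp m * (exp (p - m) - (1 + (p - m)))) >= 0).
  { apply Rle_ge. apply Rmult_le_pos; [lra|]. apply Rmult_le_pos; lra. }
  assert ((1 - th) * (exp m * (exp (q - m) - (1 + (q - m)))) >= 0).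
  { apply Rle_ge. apply Rmult_le_pos; [lra|]. apply Rmult_le_pos; lra. }
  nra.
Qed.

Theorem lemma1p1 (T : R) (B1 B2 d1 d2 phi1 phi2 : R -> R -> R) (mu1 mu2 : R) :
  0 < T ->
  (forall t x, 0 <= x -> 0 <= B1 t x /\ 0 <= B2 t x /\ 0 <= d1 t x /\ 0 <= d2 t x) ->
  periodic_t T B1 -> periodic_t T B2 -> periodic_t T d1 -> periodic_t T d2 ->
  (forall t x, 0 <= x -> 0 < phi1 t x /\ 0 < phi2 t x) ->
  periodic_t T phi1 -> periodic_t T phi2 ->
  supersol B1 d1 mu1 phi1 -> supersol B2 d2 mu2 phi2 ->
  forall th : R, 0 <= th <= 1 ->
    let phith := fun t x => rpow (phi1 t x) th * rpow (phi2 t x) (1 - th) in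
    let Bth := fun t x => rpow (B1 t x) th * rpow (B2 t x) (1 - th) in
    let dth := fun t x => th * d1 t x + (1 - th) * d2 t x in
    (forall t x, 0 <= x -> 0 < phith t x) /\
    periodic_t T phith /\
    supersol Bth dth (th * mu1 + (1 - th) * mu2) phith.
Proof.
  intros HT Hnn _ _ _ _ Hpos Hp1 Hp2 S1 S2 th Hth phith Bth dth.
  assert (Hphi : forall t x, 0 <= x ->
    phith t x = exp (th * ln (phi1 t x) + (1 - th) * ln (phi2 t x))).
  { intros t x Hx. destruct (Hpos t x Hx). unfold phith.
    rewrite !rpow_pos by lra. rewrite exp_plus. reflexivity. }
  split; [|split].
  - intros t x Hx. rewrite Hphi by exact Hx. apply exp_pos.
  - intros t x Hx. unfold phith. rewrite Hp1, Hp2 by exact Hx. reflexivity.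
  - intros t x Hx.
    destruct (S1 t x Hx) as (dt1 & dx1 & Ht1 & Hx1 & I1).
    destruct (S2 t x Hx) as (dt2 & dx2 & Ht2 & Hx2 & I2).
    destruct (Hpos t x Hx) as [Ha Hb].
    destruct (Hpos t 0 (Rle_refl 0)) as [Ha0 Hb0].
    destruct (Hnn t x Hx) as (HB1 & HB2 & Hd1 & Hd2).
    set (a := phi1 t x) in *. set (b := phi2 t x) in *.
    set (a0 := phi1 t 0) in *. set (b0 := phi2 t 0) in *.
    set (E := exp (th * ln a + (1 - th) * ln b)).
    exists (E * (th * (/ a * dt1) + (1 - th) * (/ b * dt2))),
           (E * (th * (/ a * dx1) + (1 - th) * (/ b * dx2))).
    split; [|split].
    + unfold has_pdt.
      apply is_derive_ext with
        (f := fun s => exp (th * ln (phi1 s x) + (1 - th) * ln (phi2 s x))).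
      { intros s. symmetry. apply Hphi. exact Hx. }
      replace (E * (th * (/ a * dt1) + (1 - th) * (/ b * dt2))) with
        (scal (plus (th * (scal dt1 (/ a))) ((1 - th) * (scal dt2 (/ b)))) E)
        by (unfold scal, plus; simpl; unfold mult; simpl; ring).
      apply (is_derive_comp exp (fun s => th * ln (phi1 s x) + (1 - th) * ln (phi2 s x))).
      * apply is_derive_exp.
      * apply (is_derive_plus (fun s => th * ln (phi1 s x)) (fun s => (1 - th) * ln (phi2 s x))).
        -- apply is_derive_scal. apply (is_derive_comp ln (fun s => phi1 s x)).
           apply is_derive_ln. exact Ha. exact Ht1.
        -- apply is_derive_scal. apply (is_derive_comp ln (fun s => phi2 s x)).
           apply is_derive_ln. exact Hb. exact Ht2.
    + change (pdx (phith t) x (E * (th * (/ a * dx1) + (1 - th) * (/ b * dx2)))).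
      apply pdx_ext with
        (f := fun y => exp (th * ln (phi1 t y) + (1 - th) * ln (phi2 t y))).
      { exact Hx. }
      { intros y Hy. symmetry. apply Hphi. exact Hy. }
      apply (pdx_comp exp (fun y => th * ln (phi1 t y) + (1 - th) * ln (phi2 t y))).
      * apply pdx_lin.
        -- apply (pdx_comp ln (phi1 t)). exact Hx1. apply is_derive_ln. exact Ha.
        -- apply (pdx_comp ln (phi2 t)). exact Hx2. apply is_derive_ln. exact Hb.
      * apply is_derive_exp.
    +
      unfold Bth, dth. rewrite (Hphi t x Hx), (Hphi t 0 (Rle_refl 0)). fold a b a0 b0 E.
      set (u := B1 t x * (a0 / a)). set (v := B2 t x * (b0 / b)).
      assert (Heq : rpow (B1 t x) th * rpow (B2 t x) (1 - th) *
                    exp (th * ln a0 + (1 - th) * ln b0)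
                    = E * (rpow u th * rpow v (1 - th))).
      { unfold u, v. rewrite !rpow_mulpos by (try apply Rdiv_lt_0_compat; lra).
        unfold E. rewrite !ln_div by lra.
        rewrite <- !Rmult_assoc.
        replace (rpow (B1 t x) th * rpow (B2 t x) (1 - th) *
                 exp (th * ln a0 + (1 - th) * ln b0)) with
           (rpow (B1 t x) th * rpow (B2 t x) (1 - th) *
            (exp (th * ln a + (1 - th) * ln b) *
             (exp (th * (ln a0 - ln a)) * exp ((1 - th) * (ln b0 - ln b))))).
        ring.
        rewrite <- !exp_plus. f_equal. f_equal. ring. }
      rewrite Heq.
      assert (Hu : 0 <= u) by (unfold u; apply Rmult_le_pos; [lra|apply Rlt_le, Rdiv_lt_0_compat; lra]).
      assert (Hv : 0 <= v) by (unfold v; apply Rmult_le_pos; [lra|apply Rlt_le, Rdiv_lt_0_compat; lra]).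
      pose proof (amgm u v th Hu Hv Hth) as Ham.
      assert (HE : 0 < E) by apply exp_pos.
      assert (K1 : th * ((- dt1 - dx1 + (d1 t x + mu1) * a - B1 t x * a0) / a) >= 0).
      { apply Rle_ge, Rmult_le_pos; [lra|]. apply Rdiv_le_0_compat; lra. }
      assert (K2 : (1 - th) * ((- dt2 - dx2 + (d2 t x + mu2) * b - B2 t x * b0) / b) >= 0).
      { apply Rle_ge, Rmult_le_pos; [lra|]. apply Rdiv_le_0_compat; lra. }
      assert (Hid : - (E * (th * (/ a * dt1) + (1 - th) * (/ b * dt2))) -
         E * (th * (/ a * dx1) + (1 - th) * (/ b * dx2)) +
         (th * d1 t x + (1 - th) * d2 t x + (th * mu1 + (1 - th) * mu2)) * E
         = E * (th * u + (1 - th) * v) +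
           E * (th * ((- dt1 - dx1 + (d1 t x + mu1) * a - B1 t x * a0) / a)
              + (1 - th) * ((- dt2 - dx2 + (d2 t x + mu2) * b - B2 t x * b0) / b))).
      { unfold u, v. field. split; lra. }
      rewrite Hid.
      assert (E * (rpow u th * rpow v (1 - th)) <= E * (th * u + (1 - th) * v))
        by (apply Rmult_le_compat_l; lra).
      assert (0 <= E * (th * ((- dt1 - dx1 + (d1 t x + mu1) * a - B1 t x * a0) / a)
              + (1 - th) * ((- dt2 - dx2 + (d2 t x + mu2) * b - B2 t x * b0) / b)))
        by (apply Rmult_le_pos; lra).
      lra.
Qed.
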